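(* Let $D$ be a distribution over $\mathcal{X}\times\mathcal{Y}$, $\mathcal{X}\subset\mathbb{R}^d$, $\mathcal{Y}=\{1,\dots,c\}$, that is $k$-separable with $\delta$-margin. Then there is a 2-layer network $g:\mathcal{X}\to\mathbb{R}^c$ of the form $g(x)=W^T\big(\rho(u^Tx-\beta_1),\dots,\rho(u^Tx-\beta_k)\big)^T$ with $u\in\mathbb{R}^d$, $\beta_1,\dots,\beta_k\in\mathbb{R}$, $W\in\mathbb{R}^{k\times c}$ (hence $d+(c+1)k$ parameters) that classifies perfectly: with probability $1$ over $(x,y)\sim D$, the index $y$ is the unique maximizer of $j\mapsto g_j(x)$ over $j\in\{1,\dots,c\}$.
   Context: $\rho(t)=1/(1+e^{-t})$ is the sigmoid function. Definition ($k$-separable with $\delta$-margin): Let $\mathcal{X}\subset\mathbb{R}^d$ and $\mathcal{Y}=\{1,\dots,c\}$. A distribution $D$ over $\mathcal{X}\times\mathcal{Y}$ is $k$-separable with $\delta$-margin ($\delta>0$) if there exist a projection vector $a\in\mathbb{R}^d$ with $\|a\|_2=1$ and constants $b_1<b_2<\cdots<b_{k+1}$ such that, setting $\mathcal{X}_i=\{x\in\mathcal{X}: b_i+\delta<a^Tx<b_{i+1}-\delta\}$ for $i\in\{1,\dots,k\}$: (i) for each $i$ there is $y_i\in\mathcal{Y}$ with $\mathbb{P}_{(x,y)\sim D}(y=y_i\mid x\in\mathcal{X}_i)=1$; (ii) $\mathbb{P}_{(x,y)\sim D}\big(x\in\bigcup_{i=1}^k\mathcal{X}_i\big)=1$. 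*)

(* Defs.v *)
From Stdlib Require Import Reals.
From mathcomp Require Import ssreflect ssrfun ssrbool eqtype ssrnat fintype bigop.
Set Implicit Arguments. Unset Strict Implicit. Unset Printing Implicit Defensive.
Open Scope R_scope.

Definition sigmoid (t : R) : R := 1 / (1 + exp (- t)).

Definition dotR (d : nat) (a x : 'I_d -> R) : R := \big[Rplus/0]_(i < d) (a i * x i).
Definition norm2 (d : nat) (a : 'I_d -> R) : R := sqrt (dotR a a).

(** sample space R^d x Y, with Y = {1,...,c} encoded as 'I_c = {0,...,c-1} *)
Definition sample (d c : nat) : Type := (('I_d -> R) * 'I_c)%type.

(** A probability distribution, modelled as a finitely additive probability
    defined on all events. *)
Record prob (T : Type) := Prob {
  pr : (T -> Prop) -> R;
  pr_ge0 : forall A, 0 <= pr A;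
  pr_full : pr (fun _ => True) = 1;
  pr_ext : forall A B : T -> Prop, (forall z, A z <-> B z) -> pr A = pr B;
  pr_add : forall A B : T -> Prop, (forall z, A z -> B z -> False) ->
           pr (fun z => A z \/ B z) = pr A + pr B
}.

Definition cond_prob (T : Type) (P : prob T) (A B : T -> Prop) : R :=
  pr P (fun z => A z /\ B z) / pr P B.

(** region X_i = { x | b_i + delta < a^T x < b_{i+1} - delta }, with the
    paper's b_1 < ... < b_{k+1} encoded as b 0 < ... < b k *)
Definition region (d : nat) (a : 'I_d -> R) (b : nat -> R) (delta : R)
  (i : nat) (x : 'I_d -> R) : Prop :=
  b i + delta < dotR a x < b (S i) - delta.

Definition k_separable (d c : nat) (D : prob (sample d c)) (k : nat) (delta : R)
  : Prop :=
  0 < delta /\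
  exists (a : 'I_d -> R) (b : nat -> R) (ylab : 'I_k -> 'I_c),
    norm2 a = 1 /\
    (forall i : nat, (i < k)%nat -> b i < b (S i)) /\
    (forall i : 'I_k,
       (* conditional probability, whenever defined (P(X_i) > 0) *)
       0 < pr D (fun z => region a b delta i z.1) ->
       cond_prob D (fun z => z.2 = ylab i)
                   (fun z => region a b delta i z.1) = 1) /\
    pr D (fun z => exists i : 'I_k, region a b delta i z.1) = 1.

Definition net2 (d c k : nat) (u : 'I_d -> R) (beta : 'I_k -> R)
  (W : 'I_k -> 'I_c -> R) (x : 'I_d -> R) (j : 'I_c) : R :=
  \big[Rplus/0]_(i < k) (W i j * sigmoid (dotR u x - beta i)).

(* Main.v *)
Require Import Defs.
From HB Require Import structures.
From Stdlib Require Import Reals Lra Classical.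
From mathcomp Require Import ssreflect ssrfun ssrbool eqtype ssrnat seq fintype bigop.
Open Scope R_scope.

HB.instance Definition _ := Monoid.isComLaw.Build R 0 Rplus
  (fun x y z => esym (Rplus_assoc x y z)) Rplus_comm Rplus_0_l.

Fixpoint mysum (G : nat -> R) (n : nat) : R :=
  match n with 0%nat => 0 | S m => mysum G m + G m end.

Lemma big_mysum n G : \big[Rplus/0]_(i < n) G (nat_of_ord i) = mysum G n.
Proof. elim: n => [|n IH]; first by rewrite big_ord0. by rewrite big_ord_recr /= IH. Qed.

Lemma mysum_le G H n : (forall i, (i < n)%N -> G i <= H i) -> mysum G n <= mysum H n.
Proof.
elim: n => [|n IH] h /=; first lra.
have := IH (fun i hi => h i (ltnW (leq_trans hi (leqnn _)))).
have := h n (ltnSn n). lra.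
Qed.

Lemma mysum_ge_term G n m : (forall i, (i < n)%N -> 0 <= G i) -> (m < n)%N -> G m <= mysum G n.
Proof.
elim: n => [|n IH] h //= hm.
have h' : forall i, (i < n)%N -> 0 <= G i by move=> i hi; apply: h; apply: ltnW.
have := @mysum_le (fun _ => 0) G n h'.
have -> : mysum (fun _ => 0) n = 0 by elim: n {IH h h' hm} => //= n ->; lra.
move: hm; rewrite ltnS leq_eqVlt => /orP [/eqP -> | hm] => h0.
  lra.
have := IH h' hm; have := h n (ltnSn n); lra.
Qed.

Lemma mysum_le_skip G H n m : (forall i, (i < n)%N -> 0 <= G i <= H i) -> (m < n)%N ->
  G m = 0 -> mysum G n <= mysum H n - H m.
Proof.
elim: n => [|n IH] h //= hm hG.
have h' : forall i, (i < n)%N -> 0 <= G i <= H i by move=> i hi; apply: h; apply: ltnW.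
move: hm; rewrite ltnS leq_eqVlt => /orP [/eqP e | hm].
  subst m; have := @mysum_le G H n (fun i hi => proj2 (h' i hi)).
  lra.
have := IH h' hm hG; have := h n (ltnSn n); lra.
Qed.

Lemma mysum_tele f n : mysum (fun i => f i - f (S i)) n = f 0%nat - f n.
Proof. elim: n => [|n IH] /=; [lra | rewrite IH; lra]. Qed.

Definition ppf (p : nat -> R) (n : nat) : R := match n with 0%nat => 0 | S m => p m end.

Lemma sbp p f n : mysum (fun i => (p i - ppf p i) * f i) n =
  mysum (fun i => p i * (f i - f (S i))) n + ppf p n * f n.
Proof. elim: n => [|n IH] /=; [lra | rewrite IH /=; ring]. Qed.

Lemma pr_split T (P : prob T) A B :
  pr P B = pr P (fun z => B z /\ A z) + pr P (fun z => B z /\ ~ A z).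
Proof.
rewrite -pr_add; last by move=> z [_ ?] [_ ?].
apply: pr_ext => z; split; first by move=> Hb; case: (classic (A z)) => ?; [left|right].
by case=> [[]|[]].
Qed.

Lemma pr_mono T (P : prob T) A B : (forall z, A z -> B z) -> pr P A <= pr P B.
Proof.
move=> h; rewrite (pr_split _ P A B).
have -> : pr P (fun z => B z /\ A z) = pr P A by apply: pr_ext => z; split; [case|]; auto.
have := pr_ge0 P (fun z => B z /\ ~ A z); lra.
Qed.

Lemma pr_le1 T (P : prob T) A : pr P A <= 1.
Proof. rewrite -(pr_full P); exact: pr_mono. Qed.

Lemma pr_empty T (P : prob T) A : (forall z, ~ A z) -> pr P A = 0.
Proof.
move=> h; have := @pr_add _ P A A (fun z a _ => h z a).
have -> : pr P (fun z => A z \/ A z) = pr P A by apply: pr_ext => z; tauto.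
lra.
Qed.

Lemma pr_subadd T (P : prob T) A B : pr P (fun z => A z \/ B z) <= pr P A + pr P B.
Proof.
rewrite (pr_split _ P A (fun z => A z \/ B z)).
have -> : pr P (fun z => (A z \/ B z) /\ A z) = pr P A by apply: pr_ext => z; split; [case|]; auto.
have := pr_mono _ P (fun z => (A z \/ B z) /\ ~ A z) (B).
move=> h; have : pr P (fun z => (A z \/ B z) /\ ~ A z) <= pr P B.
  by apply: h => z [[a|b] na]; [case: na|].
lra.
Qed.

Lemma pr_E T (P : prob T) (k : nat) (Rg Y : 'I_k -> T -> Prop) :
  (forall i, 0 < pr P (Rg i) ->
     pr P (fun z => Y i z /\ Rg i z) / pr P (Rg i) = 1) ->
  pr P (fun z => exists i, Rg i z) = 1 ->
  pr P (fun z => exists i, Rg i z /\ Y i z) = 1.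
Proof.
move=> hc hu.
have null : forall i, pr P (fun z => Rg i z /\ ~ Y i z) = 0.
  move=> i; have hs := pr_split _ P (Y i) (Rg i).
  have h0 := pr_ge0 P (fun z => Rg i z /\ ~ Y i z).
  have h1 := pr_ge0 P (Rg i).
  case: (Rle_lt_or_eq_dec _ _ h1) => hp.
    have := hc i hp.
    have -> : pr P (fun z => Y i z /\ Rg i z) = pr P (fun z => Rg i z /\ Y i z)
      by apply: pr_ext => z; tauto.
    move=> e.
    have e2 : pr P (fun z => Rg i z /\ Y i z) = pr P (Rg i).
      have := Rmult_eq_compat_r (pr P (Rg i)) _ _ e.
      rewrite /Rdiv Rmult_assoc Rinv_l; lra.
    lra.
  have := pr_mono _ P (fun z => Rg i z /\ ~ Y i z) (Rg i) (fun z => @proj1 _ _).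
  lra.
have nl : forall l : seq 'I_k, pr P (fun z => exists i, i \in l /\ Rg i z /\ ~ Y i z) = 0.
  elim=> [|x l IH].
    by apply: pr_empty => z [i [hi _]].
  have h1 := pr_ge0 P (fun z => exists i, i \in x :: l /\ Rg i z /\ ~ Y i z).
  have h2 := pr_subadd _ P (fun z => Rg x z /\ ~ Y x z) (fun z => exists i, i \in l /\ Rg i z /\ ~ Y i z).
  have h3 : pr P (fun z => exists i, i \in x :: l /\ Rg i z /\ ~ Y i z) <=
     pr P (fun z => (Rg x z /\ ~ Y x z) \/ (exists i, i \in l /\ Rg i z /\ ~ Y i z)).
    apply: pr_mono => z [i [hi hr]].
    move: hi; rewrite in_cons => /orP [/eqP e | hi]; [left; by rewrite -e | right; by exists i].
  rewrite null IH in h2; lra.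
have hb := nl (index_enum 'I_k).
have := pr_subadd _ P (fun z => exists i, Rg i z /\ Y i z)
   (fun z => exists i, i \in index_enum 'I_k /\ Rg i z /\ ~ Y i z).
have := pr_mono _ P (fun z => exists i, Rg i z) (fun z =>
   (exists i, Rg i z /\ Y i z) \/ (exists i, i \in index_enum 'I_k /\ Rg i z /\ ~ Y i z)).
move=> h; have {h} := h (fun z '(ex_intro i hr) => match classic (Y i z) with
  | or_introl hy => or_introl (ex_intro _ i (conj hr hy))
  | or_intror hy => or_intror (ex_intro _ i (conj (mem_index_enum i) (conj hr hy))) end).
have := pr_le1 _ P (fun z => exists i, Rg i z /\ Y i z).
rewrite hu hb; lra.
Qed.

Lemma sig_eq x : sigmoid x = / (1 + exp (- x)).
Proof. by rewrite /sigmoid /Rdiv Rmult_1_l. Qed.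

Lemma sig_pos x : 0 < sigmoid x.
Proof. rewrite sig_eq; apply: Rinv_0_lt_compat; have := exp_pos (- x); lra. Qed.

Lemma sig_lt1 x : sigmoid x < 1.
Proof.
rewrite sig_eq -Rinv_1; have := exp_pos (- x) => h.
apply: Rinv_lt_contravar; lra.
Qed.

Lemma sig_mono x y : x < y -> sigmoid x < sigmoid y.
Proof.
move=> h; rewrite !sig_eq.
have h1 : exp (- y) < exp (- x) by apply: exp_increasing; lra.
have := exp_pos (- y); have := exp_pos (- x) => h2 h3.
apply: Rinv_lt_contravar; nra.
Qed.

Lemma exp2_gt3 : 3 < exp 2.
Proof. have := exp_ineq1 2; lra. Qed.

Lemma sig_hi x : 2 < x -> 3/4 < sigmoid x.
Proof.
move=> h; apply: (Rlt_trans _ (sigmoid 2)); last exact: sig_mono.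
rewrite sig_eq exp_Ropp.
have e3 := exp2_gt3.
have : / exp 2 < / 3 by apply: Rinv_lt_contravar; lra.
have : 0 < / exp 2 by apply: Rinv_0_lt_compat; lra.
move=> h1 h2.
have -> : 3 / 4 = / (4/3) by field.
have h3 : / 3 = 1/3 by field.
apply: Rinv_lt_contravar; nra.
Qed.

Lemma sig_lo x : x < -2 -> sigmoid x < 1/4.
Proof.
move=> h; apply: (Rlt_trans _ (sigmoid (-2))); first exact: sig_mono.
rewrite sig_eq (_ : - -2 = 2); last ring.
have e3 := exp2_gt3.
have -> : 1 / 4 = / 4 by field.
apply: Rinv_lt_contravar; nra.
Qed.

Lemma dotR_scale d (s : R) (a x : 'I_d -> R) : dotR (fun l => s * a l) x = s * dotR a x.
Proof.
rewrite /dotR; elim/big_rec2: _ => [|i y1 y2 _ ->]; first ring. ring.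
Qed.

Definition pl (k c : nat) (ylab : 'I_k -> 'I_c) (j : 'I_c) (n : nat) : R :=
  match (insub n : option 'I_k) with
  | Some i => if ylab i == j then 1 else 0 | None => 0 end.
Arguments pl {k c}.

Lemma pl01 k c (ylab : 'I_k -> 'I_c) j n : 0 <= pl ylab j n <= 1.
Proof. rewrite /pl; case: insub => [i|]; [case: (_ == _)|]; lra. Qed.

Arguments pl01 {k c}.

Lemma pl_at k c (ylab : 'I_k -> 'I_c) j (i : 'I_k) :
  pl ylab j i = if ylab i == j then 1 else 0.
Proof. by rewrite /pl valK. Qed.

Arguments pl_at {k c}.

Lemma ppf01 k c (ylab : 'I_k -> 'I_c) j n : 0 <= ppf (pl ylab j) n <= 1.
Proof. case: n => [|n] /=; [lra | exact: pl01]. Qed.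
Arguments ppf01 {k c}.

Lemma net_ok d c k (a : 'I_d -> R) (b : nat -> R) delta (ylab : 'I_k -> 'I_c)
  (x : 'I_d -> R) (m : 'I_k) (j : 'I_c) :
  0 < delta -> (forall i : nat, (i < k)%N -> b i < b (S i)) ->
  region a b delta m x -> j <> ylab m ->
  net2 (fun l => 2 / delta * a l) (fun i : 'I_k => 2 / delta * b i)
       (fun (i : 'I_k) j => pl ylab j i - ppf (pl ylab j) i) x j <
  net2 (fun l => 2 / delta * a l) (fun i : 'I_k => 2 / delta * b i)
       (fun (i : 'I_k) j => pl ylab j i - ppf (pl ylab j) i) x (ylab m).
Proof.
move=> hd hb hr hj.
set s := 2 / delta.
have hs : 0 < s by rewrite /s; apply: Rdiv_lt_0_compat; lra.
have hsd : s * delta = 2 by rewrite /s; field; lra.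
set t := dotR a x.
set sig := fun n : nat => sigmoid (s * t - s * b n).
have hnet : forall j', net2 (fun l => s * a l) (fun i : 'I_k => s * b i)
       (fun (i : 'I_k) j => pl ylab j i - ppf (pl ylab j) i) x j' =
   mysum (fun n => pl ylab j' n * (sig n - sig (S n))) k + ppf (pl ylab j') k * sig k.
  move=> j'; rewrite -sbp /net2 -big_mysum; apply: eq_bigr => i _.
  by rewrite dotR_scale.
rewrite !hnet.
have hD : forall n, (n < k)%N -> 0 <= sig n - sig (S n).
  move=> n hn; rewrite /sig.
  have := hb n hn => h.
  have : sigmoid (s * t - s * b (S n)) < sigmoid (s * t - s * b n)
    by apply: sig_mono; nra.
  lra.
move: hr; rewrite /region -/t => hr.
have hm1 : 3/4 < sig m by rewrite /sig; apply: sig_hi; nra.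
have hm2 : sig (S m) < 1/4 by rewrite /sig; apply: sig_lo; nra.
have hk := sig_pos (s * t - s * b k).
have h0 := sig_lt1 (s * t - s * b 0%nat).
have hy : sig m - sig (S m) <=
    mysum (fun n => pl ylab (ylab m) n * (sig n - sig (S n))) k.
  have := @mysum_ge_term (fun n => pl ylab (ylab m) n * (sig n - sig (S n))) k m.
  rewrite /= pl_at eqxx Rmult_1_l; apply.
    move=> i hi; have := hD i hi; have := pl01 ylab (ylab m) i; nra.
  exact: ltn_ord.
have hjs : mysum (fun n => pl ylab j n * (sig n - sig (S n))) k <=
    mysum (fun n => sig n - sig (S n)) k - (sig m - sig (S m)).
  apply: mysum_le_skip.
      move=> i hi; have := hD i hi; have := pl01 ylab j i; split; nra.
    exact: ltn_ord.
  rewrite /= pl_at; case: eqP => [e|_]; [by case: hj | ring].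
rewrite mysum_tele in hjs.
have := ppf01 ylab j k; have := ppf01 ylab (ylab m) k.
rewrite -/(sig k) -/(sig 0%nat) in hk h0.
move=> p1 p2. nra.
Qed.

Theorem corollary1 (d c k : nat) (D : prob (sample d c)) (delta : R) :
  k_separable D k delta ->
  exists (u : 'I_d -> R) (beta : 'I_k -> R) (W : 'I_k -> 'I_c -> R),
    pr D (fun z => forall j : 'I_c, j <> z.2 ->
                     net2 u beta W z.1 j < net2 u beta W z.1 z.2) = 1.
Proof.
move=> [hd [a [b [ylab [_ [hb [hc hu]]]]]]].
exists (fun l => 2 / delta * a l), (fun i : 'I_k => 2 / delta * b i),
       (fun (i : 'I_k) j => pl ylab j i - ppf (pl ylab j) i).
have hE := pr_E _ D k (fun i z => region a b delta i z.1) (fun i z => z.2 = ylab i) hc hu.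
apply: Rle_antisym; first exact: pr_le1.
rewrite -hE; apply: pr_mono => z [m [hr hy]] j hj.
rewrite hy; apply: net_ok => //; by rewrite -hy.
Qed.
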